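(* Let $p_1,\dots,p_m\in[0,1]$ and let $(\ell_{i:n})_{0\le i\le n\le m}$ be reals with $\ell_{0:n}=-1$ for all $n$, such that $n\mapsto\ell_{i:n}$ is nonincreasing and $i\mapsto\ell_{i:n}$ is nondecreasing. For $A\subseteq\{1,\dots,m\}$ and $t\in[0,1]$ set $\varphi_{A,t}=\mathbf 1\{t\le\ell_{i_A(t):|A|}\}$. Then for all $S\subseteq\{1,\dots,m\}$, $n\in\{0,\dots,|S|\}$, $t\in[0,1]$, $$\varphi_{S,n,t}=\min_{0\le k\le i_{S^c}(t)}\mathbf 1\Big\{t\le\ell_{\left((n+i_S(t)-|S|)\vee0+k\right):\left(n+m-|S|-i_{S^c}(t)+k\right)}\Big\}.$$ In particular $\varphi_{\{1,\dots,m\},n,t}=\mathbf 1\{t\le\ell_{((n+i(t)-m)\vee 0):n}\}$.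
   Context: $i_A(t)=\sum_{j\in A}\mathbf 1\{p_j\le t\}$, $i(t)=i_{\{1,\dots,m\}}(t)$, $S^c=\{1,\dots,m\}\setminus S$. $\varphi_{S,n,t}=\min\{\varphi_{A,t}: A\subseteq\{1,\dots,m\},\ |A\cap S|=n\}$. *)

(* Defs.v *)
From mathcomp Require Import all_boot all_order all_algebra.
Set Implicit Arguments. Unset Strict Implicit. Unset Printing Implicit Defensive.
Import Order.TTheory GRing.Theory Num.Theory.
Local Open Scope ring_scope.

Section Defs.
Variables (R : realFieldType) (m : nat).

Definition icount (p : 'I_m -> R) (A : {set 'I_m}) (t : R) : nat :=
  #|[set j in A | p j <= t]|.

Definition ind (b : bool) : R := (b : nat)%:R.

Definition phiA (l : nat -> nat -> R) (p : 'I_m -> R) (A : {set 'I_m}) (t : R) : R :=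
  ind (t <= l (icount p A t) #|A|).

Definition phiSn (l : nat -> nat -> R) (p : 'I_m -> R) (S : {set 'I_m}) (n : nat)
  (t : R) : R :=
  \big[Num.min/1]_(A : {set 'I_m} | #|A :&: S| == n) phiA l p A t.

End Defs.

(* Main.v *)
Require Import Defs.
From mathcomp Require Import all_boot all_order all_algebra.
From mathcomp Require Import zify.
Import Order.TTheory GRing.Theory Num.Theory.
Local Open Scope ring_scope.

Lemma ex_subset_card (T : finType) (A : {set T}) (k : nat) :
  (k <= #|A|)%N -> exists B : {set T}, B \subset A /\ #|B| = k.
Proof.
elim: k => [|k IH] hk; first by exists set0; rewrite sub0set cards0.
have [B [sB cB]] := IH (ltnW hk).
have : (0 < #|A :\: B|)%N by rewrite cardsDS // cB subn_gt0.
case/card_gt0P => x; rewrite inE => /andP [xB xA].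
exists (x |: B); split; first by rewrite subUset sub1set xA sB.
by rewrite cardsU1 xB cB.
Qed.

Lemma ind_mono (R : realFieldType) (b b' : bool) : (b -> b') -> @ind R b <= @ind R b'.
Proof. by case: b; case: b' => // h; rewrite /ind /= ?ler01 ?lexx //; have := h isT. Qed.

Lemma ind_le1 (R : realFieldType) (b : bool) : @ind R b <= 1.
Proof. by case: b; rewrite /ind /= ?ler01 ?lexx. Qed.

Section Cells.
Variables (m : nat).
Implicit Types (A S P : {set 'I_m}).

Lemma cells A S P :
  [/\ #|A :&: S| = (#|(A :&: S) :&: P| + #|(A :&: S) :\: P|)%N,
      #|A :&: P| = (#|(A :&: S) :&: P| + #|(A :\: S) :&: P|)%N,
      #|A| = (#|A :&: S| + #|(A :\: S) :&: P| + #|(A :\: S) :\: P|)%N &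
      #|~: S| = (#|~: S :&: P| + #|~: S :\: P|)%N ].
Proof.
split; first by rewrite cardsID.
- have e1 : A :&: P :&: S = (A :&: S) :&: P.
    by apply/setP => j; rewrite !inE; case: (j \in A); case: (j \in S); case: (j \in P).
  have e2 : A :&: P :\: S = (A :\: S) :&: P.
    by apply/setP => j; rewrite !inE; case: (j \in A); case: (j \in S); case: (j \in P).
  by rewrite -(cardsID S (A :&: P)) e1 e2.
- by rewrite -addnA cardsID cardsID.
- by rewrite cardsID.
Qed.
End Cells.

Theorem mainTheorem7 (R : realFieldType) (m : nat) (p : 'I_m -> R)
  (l : nat -> nat -> R)
  (hp : forall j, 0 <= p j <= 1)
  (hl0 : forall n, (n <= m)%N -> l 0%N n = -1)
  (hln : forall i n n', (i <= n)%N -> (n <= n')%N -> (n' <= m)%N -> l i n' <= l i n)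
  (hli : forall i i' n, (i <= i')%N -> (i' <= n)%N -> (n <= m)%N -> l i n <= l i' n) :
  (forall (S : {set 'I_m}) (n : nat) (t : R),
     (n <= #|S|)%N -> 0 <= t <= 1 ->
     phiSn l p S n t =
     \big[Num.min/1]_(k < (icount p (~: S) t).+1)
        @ind R (t <= l ((n + icount p S t - #|S|) + k)%N
                    (n + m - #|S| - icount p (~: S) t + k)%N))
  /\
  (forall (n : nat) (t : R), (n <= m)%N -> 0 <= t <= 1 ->
     phiSn l p [set: 'I_m] n t = @ind R (t <= l (n + icount p [set: 'I_m] t - m)%N n)).
Proof.
have part1 : forall (S : {set 'I_m}) (n : nat) (t : R),
     (n <= #|S|)%N -> 0 <= t <= 1 ->
     phiSn l p S n t =
     \big[Num.min/1]_(k < (icount p (~: S) t).+1)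
        @ind R (t <= l ((n + icount p S t - #|S|) + k)%N
                    (n + m - #|S| - icount p (~: S) t + k)%N).
  move=> S n t hn _.
  pose P := [set j | p j <= t].
  have icE : forall X, icount p X t = #|X :&: P|.
    by move=> X; rewrite /icount; apply: eq_card => j; rewrite !inE.
  rewrite /phiSn !icE.
  have hSC : (#|S| + #|~: S| = m)%N by rewrite cardsC card_ord.
  have [_ _ _ hC] := @cells _ S S P.
  have hS : #|S| = (#|S :&: P| + #|S :\: P|)%N by rewrite cardsID.
  apply/le_anti/andP; split.
  -
    apply: le_bigmin => [|[k hk] _] /=.
      by apply: bigmin_le_id.
    have [B1 [sB1 cB1]] := @ex_subset_card _ (S :&: P) (n - #|S :\: P|)%N
      ltac:(lia).
    have [B2 [sB2 cB2]] := @ex_subset_card _ (S :\: P) (minn n #|S :\: P|)%N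
      ltac:(lia).
    have [C1 [sC1 cC1]] := @ex_subset_card _ (~: S :&: P) k ltac:(lia).
    pose A := B1 :|: B2 :|: C1 :|: (~: S :\: P).
    have tac : forall j, [/\ j \in B1 -> j \in S :&: P, j \in B2 -> j \in S :\: P
                 & j \in C1 -> j \in ~: S :&: P].
      by move=> j; split; apply/subsetP.
    have e1 : (A :&: S) :&: P = B1.
      apply/setP => j; have [] := tac j; rewrite !inE.
      by case: (j \in B1); case: (j \in B2); case: (j \in C1); case: (j \in S);
        case: (p j <= t) => //= h1 h2 h3; try (by have := h1 isT); try (by have := h2 isT); by have := h3 isT.
    have e2 : (A :&: S) :\: P = B2.
      apply/setP => j; have [] := tac j; rewrite !inE.
      by case: (j \in B1); case: (j \in B2); case: (j \in C1); case: (j \in S);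
        case: (p j <= t) => //= h1 h2 h3; try (by have := h1 isT); try (by have := h2 isT); by have := h3 isT.
    have e3 : (A :\: S) :&: P = C1.
      apply/setP => j; have [] := tac j; rewrite !inE.
      by case: (j \in B1); case: (j \in B2); case: (j \in C1); case: (j \in S);
        case: (p j <= t) => //= h1 h2 h3; try (by have := h1 isT); try (by have := h2 isT); by have := h3 isT.
    have e4 : (A :\: S) :\: P = ~: S :\: P.
      apply/setP => j; have [] := tac j; rewrite !inE.
      by case: (j \in B1); case: (j \in B2); case: (j \in C1); case: (j \in S);
        case: (p j <= t) => //= h1 h2 h3; try (by have := h1 isT); try (by have := h2 isT); by have := h3 isT.
    have [h1 h2 h3 _] := @cells _ A S P.
    rewrite e1 e2 e3 e4 in h1 h2 h3.
    apply: (@bigmin_inf _ _ _ _ A).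
      by apply/eqP; rewrite h1 cB1 cB2; lia.
    rewrite /phiA icE h2 h3 h1.
    apply: ind_mono => /le_trans; apply.
    have -> : (#|B1| + #|C1| = n + #|S :&: P| - #|S| + k)%N by rewrite cB1 cC1 hS; lia.
    rewrite le_eqVlt; apply/orP; left; apply/eqP; congr (l _ _); rewrite ?cB1 ?cB2 ?cC1.
    have hc2 : (#|~: S :\: P| = m - #|S| - #|~: S :&: P|)%N by move: hSC hC; clear; lia.
    rewrite hc2; move: hn hS hSC hC; clear.
    move: #|~: S :&: P| #|~: S :\: P| #|~: S| #|S :&: P| #|S :\: P| #|S| => c1 c2 c s1 s2 s.
    lia.
  -
    apply: le_bigmin => [|A /eqP hA].
      by apply: bigmin_le_id.
    have [h1 h2 h3 _] := @cells _ A S P.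
    set x3 := #|(A :\: S) :&: P| in h2 h3 *.
    have hx3 : (x3 <= #|~: S :&: P|)%N.
      apply: subset_leq_card; apply/subsetP => j; rewrite !inE.
      by case: (j \in A); case: (j \in S); case: (p j <= t).
    have hx2 : (#|(A :&: S) :\: P| <= #|S :\: P|)%N.
      apply: subset_leq_card; apply/subsetP => j; rewrite !inE.
      by case: (j \in A); case: (j \in S); case: (p j <= t).
    have hx4 : (#|(A :\: S) :\: P| <= #|~: S :\: P|)%N.
      apply: subset_leq_card; apply/subsetP => j; rewrite !inE.
      by case: (j \in A); case: (j \in S); case: (p j <= t).
    have hk : (x3 < #|~: S :&: P|.+1)%N by lia.
    apply: (@bigmin_inf _ _ _ _ (Ordinal hk)) => //=.
    rewrite /phiA icE; apply: ind_mono => /le_trans; apply.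
    clearbody x3.
    move: hA h1 h2 h3 hS hC hSC hx2 hx3 hx4 hn.
    move: #|A| #|A :&: S| #|A :&: P| #|(A :&: S) :&: P| #|(A :&: S) :\: P|
      #|(A :\: S) :\: P| #|S| #|S :&: P| #|S :\: P| #|~: S| #|~: S :&: P| #|~: S :\: P|
      => a aS aP x1 x2 x4 s s1 s2 c c1 c2 hA h1 h2 h3 hS hC hSC hx2 hx3 hx4 hn.
    apply: (@le_trans _ _ (l (n + s1 - s + x3)%N a)).
      apply: hln; lia.
    apply: hli; lia.
split; first exact: part1.
move=> n t hn ht.
rewrite part1 ?cardsT ?card_ord //.
have -> : icount p (~: [set: 'I_m]) t = 0%N.
  by rewrite /icount setCT; apply/eqP; rewrite cards_eq0; apply/eqP/setP => j; rewrite !inE.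
rewrite big_ord_recl big_ord0 addn0 subn0 addn0 addnK min_l //.
exact: ind_le1.
Qed.
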